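(* Let $\mathcal{A}$ be a $3\times 3$ octonionic Hermitian matrix ($\mathcal{A}^\dagger=\mathcal{A}$), and let $v\in\mathbb{O}^3$, $\lambda\in\mathbb{O}$ satisfy $\mathcal{A}v=v\lambda$ and $v^\dagger v=1$. Then $$v^\dagger(\mathcal{A}v)=\lambda \qquad\text{and}\qquad [v^\dagger,\mathcal{A},v]:=(v^\dagger\mathcal{A})v-v^\dagger(\mathcal{A}v)=-2\,\mathrm{Im}(\lambda).$$
   Context: $\mathbb{O}$ denotes the octonions; $v^\dagger$ is the conjugate transpose (row vector of conjugated entries); all products of vectors and matrices are computed entrywise with octonionic multiplication in the order written, parenthesized as indicated. $\mathrm{Im}(\lambda)=\tfrac12(\lambda-\overline{\lambda})$. $v\lambda$ means each component of $v$ multiplied on the right by $\lambda$. *)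

(* Defs.v *)
(* Octonions over an arbitrary real field R, built by the
   Cayley--Dickson construction R -> C -> H -> O with the convention
   (a,b)(c,d) = (ac - conj(d) b, d a + b conj(c)),  conj (a,b) = (conj a, -b). *)
From mathcomp Require Import all_boot all_order all_algebra.
Set Implicit Arguments. Unset Strict Implicit. Unset Printing Implicit Defensive.
Import Order.TTheory GRing.Theory Num.Theory.
Local Open Scope ring_scope.

Section Octonions.
Variable R : realFieldType.

Definition cpx := (R * R)%type.
Definition cadd (x y : cpx) : cpx := (x.1 + y.1, x.2 + y.2).
Definition copp (x : cpx) : cpx := (- x.1, - x.2).
Definition cconj (x : cpx) : cpx := (x.1, - x.2).
Definition cmul (x y : cpx) : cpx :=
  (x.1 * y.1 - y.2 * x.2, y.2 * x.1 + x.2 * y.1).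
Definition cscale (r : R) (x : cpx) : cpx := (r * x.1, r * x.2).
Definition czero : cpx := (0, 0).

Definition quat := (cpx * cpx)%type.
Definition qadd (x y : quat) : quat := (cadd x.1 y.1, cadd x.2 y.2).
Definition qopp (x : quat) : quat := (copp x.1, copp x.2).
Definition qconj (x : quat) : quat := (cconj x.1, copp x.2).
Definition qmul (x y : quat) : quat :=
  (cadd (cmul x.1 y.1) (copp (cmul (cconj y.2) x.2)),
   cadd (cmul y.2 x.1) (cmul x.2 (cconj y.1))).
Definition qscale (r : R) (x : quat) : quat := (cscale r x.1, cscale r x.2).
Definition qzero : quat := (czero, czero).

Definition oct := (quat * quat)%type.
Definition oadd (x y : oct) : oct := (qadd x.1 y.1, qadd x.2 y.2).
Definition oopp (x : oct) : oct := (qopp x.1, qopp x.2).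
Definition osub (x y : oct) : oct := oadd x (oopp y).
Definition oconj (x : oct) : oct := (qconj x.1, qopp x.2).
Definition omul (x y : oct) : oct :=
  (qadd (qmul x.1 y.1) (qopp (qmul (qconj y.2) x.2)),
   qadd (qmul y.2 x.1) (qmul x.2 (qconj y.1))).
Definition oscale (r : R) (x : oct) : oct := (qscale r x.1, qscale r x.2).
Definition ozero : oct := (qzero, qzero).
Definition oone : oct := (((1, 0), czero), qzero).

Definition oIm (x : oct) : oct := oscale (2^-1) (osub x (oconj x)).

Definition ovec := 'I_3 -> oct.
Definition omat := 'I_3 -> 'I_3 -> oct.

Definition osum (F : 'I_3 -> oct) : oct := \big[oadd/ozero]_(i < 3) F i.

Definition oHermitian (A : omat) : Prop := forall i j, oconj (A j i) = A i j.

Definition matvec (A : omat) (v : ovec) : ovec := fun i => osum (fun j => omul (A i j) (v j)).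
Definition dagmat (v : ovec) (A : omat) : ovec := fun j => osum (fun i => omul (oconj (v i)) (A i j)).
Definition rowcol (r c : ovec) : oct := osum (fun i => omul (r i) (c i)).
Definition dagvec (v w : ovec) : oct := rowcol (fun i => oconj (v i)) w.
Definition vecscal (v : ovec) (l : oct) : ovec := fun i => omul (v i) l.

End Octonions.

(* Main.v *)
Require Import Defs.
From mathcomp Require Import all_boot all_order all_algebra ring.
Set Implicit Arguments. Unset Strict Implicit. Unset Printing Implicit Defensive.
Import Order.TTheory GRing.Theory Num.Theory.
Local Open Scope ring_scope.

Section S.
Variable R : realFieldType.

Definition onorm (x : oct R) : R :=
  x.1.1.1^+2 + x.1.1.2^+2 + x.1.2.1^+2 + x.1.2.2^+2 +
  x.2.1.1^+2 + x.2.1.2^+2 + x.2.2.1^+2 + x.2.2.2^+2.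

Ltac octsolve :=
  repeat match goal with x : oct R |- _ => destruct x as [[[? ?] [? ?]] [[? ?] [? ?]]] end;
  cbv beta iota delta [onorm omul oconj oadd oopp osub oscale ozero oone oIm qadd qmul qconj qopp qscale qzero cadd cmul cconj copp cscale czero fst snd];
  congr (((_,_),(_,_)),((_,_),(_,_))); ring.

Lemma alt_l (x y : oct R) : omul (oconj x) (omul x y) = oscale (onorm x) y.
Proof. octsolve. Qed.
Lemma alt_r (x y : oct R) : omul (omul y (oconj x)) x = oscale (onorm x) y.
Proof. octsolve. Qed.
Lemma conj_mul (x y : oct R) : oconj (omul x y) = omul (oconj y) (oconj x).
Proof. octsolve. Qed.
Lemma conj_add (x y : oct R) : oconj (oadd x y) = oadd (oconj x) (oconj y).
Proof. octsolve. Qed.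
Lemma conj_zero : oconj (ozero R) = ozero R.
Proof. octsolve. Qed.
Lemma norm1 (x : oct R) : omul (oconj x) x = oscale (onorm x) (oone R).
Proof. octsolve. Qed.

Lemma osum3 (F : 'I_3 -> oct R) :
  osum F = oadd (F ord0) (oadd (F (inord 1)) (oadd (F (inord 2)) (ozero R))).
Proof.
rewrite /osum !big_ord_recl big_ord0.
by congr (oadd (F _) (oadd (F _) (oadd (F _) _))); apply: val_inj; rewrite /= ?inordK.
Qed.

Lemma sum_scale a b c (y : oct R) :
  oadd (oscale a y) (oadd (oscale b y) (oadd (oscale c y) (ozero R))) = oscale (a+b+c) y.
Proof. octsolve. Qed.

Lemma scale1 (y : oct R) : oscale 1 y = y.
Proof. octsolve. Qed.

Lemma scale_one_eq a : oscale a (oone R) = oone R -> a = 1.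
Proof. move=> /(congr1 (fun x => x.1.1.1)) /=. by rewrite mulr1. Qed.

Lemma final (l : oct R) : osub (oconj l) l = oscale (-2) (oIm l).
Proof.
have h : (-2 : R) * 2^-1 = -1.
  by rewrite mulNr divff // pnatr_eq0.
destruct l as [[[? ?] [? ?]] [[? ?] [? ?]]].
cbv beta iota delta [onorm omul oconj oadd oopp osub oscale ozero oone oIm qadd qmul qconj qopp qscale qzero cadd cmul cconj copp cscale czero fst snd].
congr (((_,_),(_,_)),((_,_),(_,_))); rewrite !mulrA h; ring.
Qed.

End S.

Theorem mainTheorem5 (R : realFieldType) (A : omat R) (v : ovec R) (l : oct R) :
  oHermitian A ->
  matvec A v = vecscal v l ->
  dagvec v v = oone R ->
  dagvec v (matvec A v) = l /\
  osub (rowcol (dagmat v A) v) (dagvec v (matvec A v)) = oscale (-2)%R (oIm l).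
Proof.
move=> HA Hv Hn.
have Hs : onorm (v ord0) + onorm (v (inord 1)) + onorm (v (inord 2)) = 1.
  move: Hn; rewrite /dagvec /rowcol osum3 !norm1 sum_scale; exact: scale_one_eq.
have P1 : dagvec v (matvec A v) = l.
  rewrite Hv /dagvec /rowcol /vecscal osum3 !alt_l sum_scale Hs; exact: scale1.
split => //.
rewrite P1.
have D : forall j, dagmat v A j = oconj (omul (v j) l).
  move=> j; have := congr1 (fun f => f j) Hv; rewrite /matvec /vecscal /= => <-.
  rewrite /dagmat !osum3 !conj_add conj_zero !conj_mul !HA //.
rewrite /rowcol osum3 !D !conj_mul !alt_r sum_scale Hs scale1; exact: final.
Qed.
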